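(* Let $\tau\in(V_{j-1},V_j)$ for some $1\le j\le n$, and $\chi\in\mathbb R$. If $i\ne j$ is an index with $\beta_i\neq\pm1$, then there is no $z_0\in[e^{V_{i-1}},e^{V_i}]$ such that $\lim_{z\to z_0} zS'_{\tau,\chi}(z)=0$ (limit taken over $z\in\mathbb C\setminus\mathbb R$).
   Context: Let $V_0<V_1<\dots<V_n$, $\beta_1,\dots,\beta_n\in[-1,1]$, $\beta_0:=-1$, $\beta_{n+1}:=1$, with $\beta_i\ne\beta_{i+1}$ for all $0\le i\le n$. Let $V:[V_0,V_n]\to\mathbb R$ be continuous and linear with slope $\beta_i$ on $[V_{i-1},V_i]$. For $\tau\in[V_0,V_n]$, $\chi\in\mathbb R$ and $z\in\mathbb C\setminus\mathbb R$ define $$S_{\tau,\chi}(z)=\int_{V_0}^{\tau}\tfrac12(1+V'(M))\ln(1-e^{M}z^{-1})\,dM-\int_{\tau}^{V_n}\tfrac12(1-V'(M))\ln(1-e^{-M}z)\,dM-\big(\chi-\tfrac12V(\tau)\big)\ln z,$$ with $\ln$ the principal branch. *)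

(* Defs.v *)
From Stdlib Require Import Reals.
From Coquelicot Require Import Coquelicot.

Open Scope R_scope.

Definition Carg (z : C) : R :=
  if Rle_dec 0 (Im z) then acos (Re z / Cmod z) else - acos (Re z / Cmod z).

Definition Cln (z : C) : C := (ln (Cmod z), Carg z).

(* S_{tau,chi}(z) for breakpoints Vs 0 < ... < Vs n and the
   piecewise-linear function Vf (its derivative is taken with Coquelicot's
   Derive; it is only undefined at finitely many points, which does not
   affect the Riemann integrals). *)
Definition S_fun (Vs : nat -> R) (n : nat) (Vf : R -> R) (tau chi : R) (z : C) : C :=
  (@RInt C_R_CompleteNormedModule (fun M => (RtoC (/2 * (1 + Derive Vf M))%R * Cln (1 - RtoC (exp M) / z))%C : C)
        (Vs 0%nat) tau
   - @RInt C_R_CompleteNormedModule (fun M => (RtoC (/2 * (1 - Derive Vf M))%R * Cln (1 - RtoC (exp (- M)) * z))%C : C)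
        tau (Vs n)
   - RtoC (chi - /2 * Vf tau)%R * Cln z)%C.

(* Main.v *)
Require Import Defs.
From Stdlib Require Import Reals Lra Lia Psatz List.
From Coquelicot Require Import Coquelicot.
Open Scope R_scope.

Lemma atan_le_id t : 0 <= t -> atan t <= t.
Proof.
  intros Ht.
  destruct (Req_dec t 0) as [->|Hne]. rewrite atan_0; lra.
  destruct (MVT_cor2 (fun x => x - atan x) (fun x => 1 - /(1 + x^2)) 0 t) as [c [Hc1 Hc2]].
  - lra.
  - intros c _. apply derivable_pt_lim_minus. apply derivable_pt_lim_id.
    apply derivable_pt_lim_atan.
  - rewrite atan_0 in Hc1.
    assert (0 <= 1 - /(1+c^2)).
    { assert (1 <= 1 + c^2) by nra. assert (/(1+c^2) <= 1).
      { rewrite <- Rinv_1. apply Rinv_le_contravar; lra. } lra. }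
    nra.
Qed.

Lemma atan_mono a b : a <= b -> atan a <= atan b.
Proof. intros H. destruct (Req_dec a b) as [->|]. lra. left; apply atan_increasing; lra. Qed.

Lemma atan_ge0 t : 0 <= t -> 0 <= atan t.
Proof. intros. rewrite <- atan_0. now apply atan_mono. Qed.

Lemma atan_lb_pos t : 0 < t -> PI/2 - /t <= atan t.
Proof.
  intros Ht. pose proof (atan_inv t Ht). pose proof (atan_le_id (/t)).
  assert (0 <= /t) by (left; apply Rinv_0_lt_compat; lra). lra.
Qed.

Lemma atan_ub_neg t : t < 0 -> atan t <= - (PI/2) + / (- t).
Proof.
  intros Ht. replace t with (- (-t)) by ring. rewrite atan_opp.
  pose proof (atan_lb_pos (-t) ltac:(lra)). rewrite Ropp_involutive. lra.
Qed.

Lemma acos_formula a b : 0 < b -> acos (a / sqrt (a^2 + b^2)) = PI/2 - atan (a/b).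
Proof.
  intros Hb.
  set (s := sqrt (a^2+b^2)).
  assert (Hs2 : s * s = a^2 + b^2) by (apply sqrt_sqrt; nra).
  assert (Hs : 0 < s) by (apply sqrt_lt_R0; nra).
  assert (Ht : -1 < a / s < 1).
  { assert (Hlt : -s < a < s) by (split; nra).
    split; apply Rmult_lt_reg_r with s; auto; unfold Rdiv; rewrite Rmult_assoc, Rinv_l by lra; lra. }
  rewrite acos_asin by lra. rewrite asin_atan by lra.
  assert (E : 1 - (a/s)² = (b/s)²).
  { unfold Rsqr. replace (b/s*(b/s)) with ((s*s - a*a)/(s*s)).
    field; lra. replace (s*s - a*a) with (b*b) by (rewrite Hs2; ring). field; lra. }
  rewrite E, sqrt_Rsqr.
  - f_equal. f_equal. field. split; lra.
  - left. apply Rdiv_lt_0_compat; lra.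
Qed.


Lemma Cmod_eq w : Cmod w = sqrt (Re w ^ 2 + Im w ^ 2).
Proof. reflexivity. Qed.

Lemma Carg_pos w : 0 < Im w -> Carg w = PI/2 - atan (Re w / Im w).
Proof.
  intros H. unfold Carg. destruct (Rle_dec 0 (Im w)); [|lra].
  rewrite Cmod_eq. now apply acos_formula.
Qed.

Lemma Carg_neg w : Im w < 0 -> Carg w = - (PI/2 - atan (Re w / (- Im w))).
Proof.
  intros H. unfold Carg. destruct (Rle_dec 0 (Im w)); [lra|].
  rewrite Cmod_eq. replace (Im w ^ 2) with ((- Im w)^2) by ring. f_equal. apply acos_formula; lra.
Qed.


Lemma ex_RInt_pw (f : R -> R) (l : list R) : forall a b, a <= b ->
  (forall p q, a <= p -> p < q -> q <= b -> (forall x, p < x < q -> ~ In x l) ->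
     exists g : R -> R, (forall x, continuous g x) /\ forall x, p < x < q -> f x = g x) ->
  ex_RInt f a b.
Proof.
  induction l as [|c l IH]; intros a b Hab H.
  - destruct (Req_dec a b) as [<-|Hne]. apply ex_RInt_point.
    destruct (H a b) as [g [Hg Hfg]]; try lra. intros x _ []. 
    apply ex_RInt_ext with g.
    + intros x Hx. rewrite Rmin_left, Rmax_right in Hx by lra. symmetry; apply Hfg; lra.
    + apply (@ex_RInt_continuous R_CompleteNormedModule). intros; apply Hg.
  - destruct (Rlt_le_dec a c) as [Hac|Hca]; [destruct (Rlt_le_dec c b) as [Hcb|Hbc]|].
    + apply ex_RInt_Chasles with c.
      * apply IH; [lra|]. intros p q Hp Hpq Hq Hnl. apply H; try lra.
        intros x Hx [E|E]; [lra|]. exact (Hnl x Hx E).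
      * apply IH; [lra|]. intros p q Hp Hpq Hq Hnl. apply H; try lra.
        intros x Hx [E|E]; [lra|]. exact (Hnl x Hx E).
    + apply IH; auto. intros p q Hp Hpq Hq Hnl. apply H; try lra.
      intros x Hx [E|E]; [lra|]. exact (Hnl x Hx E).
    + apply IH; auto. intros p q Hp Hpq Hq Hnl. apply H; try lra.
      intros x Hx [E|E]; [lra|]. exact (Hnl x Hx E).
Qed.

Lemma RInt_le_pw (f g : R -> R) (l : list R) : forall a b, a <= b ->
  ex_RInt f a b -> ex_RInt g a b ->
  (forall x, a < x < b -> ~ In x l -> f x <= g x) -> RInt f a b <= RInt g a b.
Proof.
  induction l as [|c l IH]; intros a b Hab Hf Hg H.
  - apply RInt_le; try (intros x Hx; apply H); auto.
  - destruct (Rlt_le_dec a c) as [Hac|Hca]; [destruct (Rlt_le_dec c b) as [Hcb|Hbc]|].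
    + assert (Ef1 : ex_RInt f a c) by (apply (@ex_RInt_Chasles_1 R_CompleteNormedModule) with b; auto; lra).
      assert (Ef2 : ex_RInt f c b) by (apply (@ex_RInt_Chasles_2 R_CompleteNormedModule) with a; auto; lra).
      assert (Eg1 : ex_RInt g a c) by (apply (@ex_RInt_Chasles_1 R_CompleteNormedModule) with b; auto; lra).
      assert (Eg2 : ex_RInt g c b) by (apply (@ex_RInt_Chasles_2 R_CompleteNormedModule) with a; auto; lra).
      pose proof (RInt_Chasles f a c b Ef1 Ef2) as C1.
      pose proof (RInt_Chasles g a c b Eg1 Eg2) as C2.
      rewrite <- C1, <- C2. unfold plus; simpl.
      apply Rplus_le_compat.
      * apply IH; try lra. apply (@ex_RInt_Chasles_1 R_CompleteNormedModule) with b; auto; lra.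
        apply (@ex_RInt_Chasles_1 R_CompleteNormedModule) with b; auto; lra.
        intros x Hx Hn. apply H. lra. intros [E|E]; [lra|auto].
      * apply IH; try lra. apply (@ex_RInt_Chasles_2 R_CompleteNormedModule) with a; auto; lra.
        apply (@ex_RInt_Chasles_2 R_CompleteNormedModule) with a; auto; lra.
        intros x Hx Hn. apply H. lra. intros [E|E]; [lra|auto].
    + apply IH; auto. intros x Hx Hn. apply H. lra. intros [E|E]; [lra|auto].
    + apply IH; auto. intros x Hx Hn. apply H. lra. intros [E|E]; [lra|auto].
Qed.

Lemma RInt_ge_const_pw (f : R -> R) (l : list R) c a b : a <= b -> ex_RInt f a b ->
  (forall x, a < x < b -> ~ In x l -> c <= f x) -> c * (b - a) <= RInt f a b.
Proof.
  intros Hab Hf H.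
  assert (E : RInt (fun _ => c) a b = c * (b - a)).
  { rewrite RInt_const. unfold scal; simpl; unfold mult; simpl. ring. }
  rewrite <- E. apply RInt_le_pw with l; auto. apply ex_RInt_const.
Qed.

Lemma RInt_le_const_pw (f : R -> R) (l : list R) c a b : a <= b -> ex_RInt f a b ->
  (forall x, a < x < b -> ~ In x l -> f x <= c) -> RInt f a b <= c * (b - a).
Proof.
  intros Hab Hf H.
  assert (E : RInt (fun _ => c) a b = c * (b - a)).
  { rewrite RInt_const. unfold scal; simpl; unfold mult; simpl. ring. }
  rewrite <- E. apply RInt_le_pw with l; auto. apply ex_RInt_const.
Qed.


Lemma Vs_mono (n : nat) (Vs : nat -> R) (HVs : forall k, (k < n)%nat -> Vs k < Vs (S k)) :
  forall a b, (a <= b)%nat -> (b <= n)%nat -> Vs a <= Vs b.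
Proof.
  intros a b Hab Hb. induction b as [|b IH].
  - assert (a = 0%nat) by lia. subst; lra.
  - destruct (Nat.eq_dec a (S b)) as [->|Hne]. lra.
    assert (Vs a <= Vs b) by (apply IH; lia). pose proof (HVs b ltac:(lia)). lra.
Qed.

Lemma Vs_smono (n : nat) (Vs : nat -> R) (HVs : forall k, (k < n)%nat -> Vs k < Vs (S k)) :
  forall a b, (a < b)%nat -> (b <= n)%nat -> Vs a < Vs b.
Proof.
  intros a b Hab Hb. destruct b as [|b]. lia.
  pose proof (Vs_mono n Vs HVs a b ltac:(lia) ltac:(lia)). pose proof (HVs b ltac:(lia)). lra.
Qed.

Lemma Derive_seg (n : nat) (Vs beta : nat -> R) (Vf : R -> R)
  (HVf : forall k : nat, (1 <= k <= n)%nat ->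
         forall M : R, Vs (pred k) <= M <= Vs k ->
         Vf M = Vf (Vs (pred k)) + beta k * (M - Vs (pred k)))
  k (Hk : (1 <= k <= n)%nat) M (HM : Vs (pred k) < M < Vs k) : Derive Vf M = beta k.
Proof.
  apply is_derive_unique.
  apply is_derive_ext_loc with (fun t => Vf (Vs (pred k)) + beta k * (t - Vs (pred k))).
  - assert (He : 0 < Rmin (M - Vs (pred k)) (Vs k - M)) by (apply Rmin_glb_lt; lra).
    exists (mkposreal _ He). intros t Ht. simpl in Ht. unfold ball in Ht; simpl in Ht.
    unfold AbsRing_ball, abs, minus, plus, opp in Ht; simpl in Ht.
    pose proof (Rmin_l (M - Vs (pred k)) (Vs k - M)). pose proof (Rmin_r (M - Vs (pred k)) (Vs k - M)).
    apply Rabs_def2 in Ht.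
    symmetry; apply HVf; auto; lra.
  - auto_derive; auto. ring.
Qed.

Definition bl (n : nat) (Vs : nat -> R) : list R := map Vs (seq 0 (S n)).

Lemma In_bl n Vs k : (k <= n)%nat -> In (Vs k) (bl n Vs).
Proof. intros. unfold bl. apply in_map. apply in_seq. lia. Qed.

Lemma seg_exists (n : nat) (Vs : nat -> R) (HVs : forall k, (k < n)%nat -> Vs k < Vs (S k)) M :
  Vs 0%nat < M -> M < Vs n -> ~ In M (bl n Vs) ->
  exists k, (1 <= k <= n)%nat /\ Vs (pred k) < M < Vs k.
Proof.
  intros H0 Hn Hnot.
  assert (Gen : forall m, (m <= n)%nat -> M < Vs m -> exists k, (1 <= k <= m)%nat /\ Vs (pred k) < M < Vs k).
  { induction m as [|m IH]; intros Hm HMm. lra.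
    destruct (Rlt_le_dec M (Vs m)) as [Hlt|Hle].
    - destruct (IH ltac:(lia) Hlt) as [k [Hk1 Hk2]]. exists k; split; auto; lia.
    - exists (S m). split. lia. simpl. split; auto.
      destruct Hle as [Hle|Heq]; auto. exfalso; apply Hnot. rewrite <- Heq. apply In_bl; lia. }
  destruct (Gen n ltac:(lia) Hn) as [k [Hk1 Hk2]]. exists k; split; auto.
Qed.

Lemma seg_interval (n : nat) (Vs : nat -> R) (HVs : forall k, (k < n)%nat -> Vs k < Vs (S k)) p q :
  Vs 0%nat <= p -> p < q -> q <= Vs n -> (forall x, p < x < q -> ~ In x (bl n Vs)) ->
  exists k, (1 <= k <= n)%nat /\ forall x, p < x < q -> Vs (pred k) < x < Vs k.
Proof.
  intros Hp Hpq Hq Hno.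
  set (m := (p + q) / 2).
  destruct (seg_exists n Vs HVs m) as [k [Hk Hmk]]; unfold m; try lra.
  apply Hno; lra.
  exists k; split; auto. intros x Hx. split.
  - destruct (Rlt_le_dec (Vs (pred k)) x) as [|Hle]; auto. exfalso.
    destruct Hle as [Hlt|Heq].
    + apply (Hno (Vs (pred k))). unfold m in Hmk. lra. apply In_bl. lia.
    + apply (Hno x Hx). rewrite Heq. apply In_bl; lia.
  - destruct (Rlt_le_dec x (Vs k)) as [|Hle]; auto. exfalso.
    destruct Hle as [Hlt|Heq].
    + apply (Hno (Vs k)). unfold m in Hmk. lra. apply In_bl. lia.
    + apply (Hno x Hx). rewrite <- Heq. apply In_bl; lia.
Qed.


Lemma C_RInt_Im (f : R -> C) a b : ex_RInt (fun t => fst (f t)) a b -> ex_RInt (fun t => snd (f t)) a b ->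
  ex_RInt (V := C_R_CompleteNormedModule) f a b /\
  Im (@RInt C_R_CompleteNormedModule f a b) = RInt (fun t => snd (f t)) a b.
Proof.
  intros [l1 H1] [l2 H2].
  assert (H : is_RInt (V := C_R_NormedModule) f a b (l1, l2)).
  { apply (@is_RInt_fct_extend_pair R_NormedModule R_NormedModule); auto. }
  split. exists (l1, l2). exact H.
  rewrite (is_RInt_unique (V := C_R_CompleteNormedModule) f a b (l1,l2) H).
  simpl. symmetry. now apply is_RInt_unique.
Qed.


Lemma Im_le_Cmod c : Rabs (Im c) <= Cmod c.
Proof.
  destruct c as [a b]. unfold Cmod; simpl. rewrite <- sqrt_Rsqr_abs.
  apply sqrt_le_1_alt. unfold Rsqr. nra.
Qed.

Lemma deriv_horiz (f : C -> C) (x y : R) (l : C) :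
  is_derive f (x,y) l -> is_derive (fun t : R => Im (f (t,y))) x (Im l).
Proof.
  intros [_ H]. split. apply is_linear_scal_l.
  intros x' Hx'. apply (is_filter_lim_locally_unique (K:=R_AbsRing) (V:=R_NormedModule)) in Hx'. subst x'.
  intros eps.
  specialize (H (x,y) (fun P HP => HP) eps).
  destruct H as [d Hd].
  exists d. intros t Ht.
  unfold ball in *; simpl in *. unfold AbsRing_ball in *. unfold abs, minus, plus, opp in *; simpl in *.
  assert (Hb : Cmod ((t,y) + - (x,y))%C < d).
  { unfold Cmod; simpl.
    match goal with |- sqrt ?A < _ => replace A with (Rsqr (t + -x)) by (unfold Rsqr; ring) end.
    rewrite sqrt_Rsqr_abs. exact Ht. }
  specialize (Hd (t,y) Hb).
  unfold norm in *; simpl in *. unfold abs, scal in *; simpl in *. unfold mult in *; simpl in *.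
  set (B := (f (t, y) + - f (x, y) + - (((t, y) + - (x, y)) * l))%C) in Hd.
  assert (EB : Im (f (t, y)) + - Im (f (x, y)) + - ((t + - x) * Im l) = Im B).
  { unfold B. unfold Cplus, Copp, Cmult, Im; simpl. ring. }
  assert (EC : Cmod ((t, y) + - (x, y))%C = Rabs (t + - x)).
  { unfold Cmod; simpl. match goal with |- sqrt ?A = _ => replace A with (Rsqr (t + -x)) by (unfold Rsqr; ring) end.
    apply sqrt_Rsqr_abs. }
  rewrite EB. rewrite EC in Hd. eapply Rle_trans; [apply Im_le_Cmod|]. exact Hd.
Qed.


Lemma w1_re x y M : 0 < y -> Re (1 - RtoC (exp M) / (x,y))%C = 1 - exp M * x / (x*x+y*y).
Proof. intros Hy. unfold Cdiv, Cminus, Cmult, Cinv, Cplus, Copp, RtoC, Re; simpl. field. nra. Qed.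
Lemma w1_im x y M : 0 < y -> Im (1 - RtoC (exp M) / (x,y))%C = exp M * y / (x*x+y*y).
Proof. intros Hy. unfold Cdiv, Cminus, Cmult, Cinv, Cplus, Copp, RtoC, Im; simpl. field. nra. Qed.
Lemma w2_re x y M : Re (1 - RtoC (exp (-M)) * (x,y))%C = 1 - exp (-M) * x.
Proof. unfold Cminus, Cmult, Cplus, Copp, RtoC, Re; simpl. ring. Qed.
Lemma w2_im x y M : Im (1 - RtoC (exp (-M)) * (x,y))%C = - (exp (-M) * y).
Proof. unfold Cminus, Cmult, Cplus, Copp, RtoC, Im; simpl. ring. Qed.

Lemma Carg_w1 x y M : 0 < y ->
  Carg (1 - RtoC (exp M) / (x,y))%C = PI/2 - atan ((x*x+y*y - exp M * x)/(exp M * y)).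
Proof.
  intros Hy. pose proof (exp_pos M). assert (0 < x*x+y*y) by nra.
  rewrite Carg_pos; rewrite ?w1_im, ?w1_re by auto.
  - do 2 f_equal. field. split; nra.
  - apply Rdiv_lt_0_compat; nra.
Qed.

Lemma Carg_w2 x y M : 0 < y ->
  Carg (1 - RtoC (exp (-M)) * (x,y))%C = atan ((exp M - x)/y) - PI/2.
Proof.
  intros Hy. pose proof (exp_pos M). rewrite exp_Ropp.
  assert (0 < / exp M) by (apply Rinv_0_lt_compat; auto).
  rewrite <- exp_Ropp. rewrite Carg_neg; rewrite ?w2_im, ?w2_re by auto.
  - rewrite exp_Ropp. replace ((1 - / exp M * x) / - - (/ exp M * y)) with ((exp M - x) / y).
    ring. field. split; lra.
  - rewrite exp_Ropp. nra.
Qed.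

Lemma Carg_z x y : 0 < x -> 0 < y -> 0 <= Carg (x,y) <= y / x.
Proof.
  intros Hx Hy. rewrite Carg_pos by (simpl; auto). simpl.
  assert (0 < x/y) by (apply Rdiv_lt_0_compat; auto).
  rewrite <- atan_inv by auto. replace (/ (x/y)) with (y/x) by (field; lra).
  split. apply atan_ge0. left; apply Rdiv_lt_0_compat; auto. apply atan_le_id. left; apply Rdiv_lt_0_compat; auto.
Qed.

Lemma cont_Carg_w1 x y M : 0 < y -> continuous (fun M => Carg (1 - RtoC (exp M) / (x,y))%C) M.
Proof.
  intros Hy. apply continuous_ext with (fun M => PI/2 - atan ((x*x+y*y - exp M * x)/(exp M * y))).
  intros t; symmetry; apply Carg_w1; auto.
  apply (ex_derive_continuous (K:=R_AbsRing) (V:=R_NormedModule)). auto_derive. pose proof (exp_pos M). nra.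
Qed.

Lemma cont_Carg_w2 x y M : 0 < y -> continuous (fun M => Carg (1 - RtoC (exp (-M)) * (x,y))%C) M.
Proof.
  intros Hy. apply continuous_ext with (fun M => atan ((exp M - x)/y) - PI/2).
  intros t; symmetry; apply Carg_w2; auto.
  apply (ex_derive_continuous (K:=R_AbsRing) (V:=R_NormedModule)). auto_derive. lra.
Qed.

Lemma cont_ln_w1 x y M : 0 < y -> continuous (fun M => ln (Cmod (1 - RtoC (exp M) / (x,y))%C)) M.
Proof.
  intros Hy. apply continuous_ext with
    (fun M => ln (sqrt ((1 - exp M * x / (x*x+y*y))^2 + (exp M * y / (x*x+y*y))^2))).
  intros t. unfold Cmod. rewrite <- w1_re, <- w1_im by auto. reflexivity.
  apply (ex_derive_continuous (K:=R_AbsRing) (V:=R_NormedModule)). assert (0 < x*x+y*y) by nra.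
  assert (0 < (exp M * y / (x*x+y*y))) by (apply Rdiv_lt_0_compat; [pose proof (exp_pos M); nra|auto]).
  assert (0 < (1 - exp M * x / (x*x+y*y))^2 + (exp M * y / (x*x+y*y))^2) by
    (apply Rplus_le_lt_0_compat; [apply pow2_ge_0|apply pow_lt; auto]).
  auto_derive. match goal with |- 0 < ?A /\ _ => assert (HA : A = (1 - exp M * x / (x*x+y*y))^2 + (exp M * y / (x*x+y*y))^2) by (unfold Rdiv; ring) end.
  rewrite HA. repeat split; auto. apply sqrt_lt_R0; auto.
Qed.

Lemma cont_ln_w2 x y M : 0 < y -> continuous (fun M => ln (Cmod (1 - RtoC (exp (-M)) * (x,y))%C)) M.
Proof.
  intros Hy. apply continuous_ext with
    (fun M => ln (sqrt ((1 - exp (-M) * x)^2 + (- (exp (-M) * y))^2))).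
  intros t. unfold Cmod. rewrite <- (w2_re x y t), <- (w2_im x y t). reflexivity.
  apply (ex_derive_continuous (K:=R_AbsRing) (V:=R_NormedModule)).
  assert (0 < exp (-M) * y) by (pose proof (exp_pos (-M)); nra).
  assert (0 < (1 - exp (-M) * x)^2 + (- (exp (-M) * y))^2) by
    (replace ((- (exp (-M) * y))^2) with ((exp (-M) * y)^2) by ring; apply Rplus_le_lt_0_compat; [apply pow2_ge_0|apply pow_lt; auto]).
  auto_derive. match goal with |- 0 < ?A /\ _ => assert (HA : A = (1 - exp (-M) * x)^2 + (- (exp (-M) * y))^2) by (unfold Rdiv; ring) end.
  rewrite HA. repeat split; auto. apply sqrt_lt_R0; auto.
Qed.


Lemma atan_lb' t c : 0 < c -> c <= t -> PI/2 - /c <= atan t.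
Proof.
  intros Hc Ht. pose proof (atan_lb_pos t ltac:(lra)).
  assert (/t <= /c) by (apply Rinv_le_contravar; lra). lra.
Qed.

Lemma atan_ub' t c : 0 < c -> t <= - c -> atan t <= - (PI/2) + /c.
Proof.
  intros Hc Ht. pose proof (atan_ub_neg t ltac:(lra)).
  assert (/(-t) <= /c) by (apply Rinv_le_contravar; lra). lra.
Qed.

Definition rr (x y M : R) := (x*x + y*y - exp M * x)/(exp M * y).

Lemma D1_eq x1 x2 y M : 0 < y ->
  Carg (1 - RtoC (exp M) / (x1,y))%C - Carg (1 - RtoC (exp M) / (x2,y))%C = atan (rr x2 y M) - atan (rr x1 y M).
Proof. intros Hy. rewrite !Carg_w1 by auto. unfold rr. ring. Qed.

Lemma E2_eq x1 x2 y M : 0 < y ->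
  Carg (1 - RtoC (exp (- M)) * (x1,y))%C - Carg (1 - RtoC (exp (- M)) * (x2,y))%C = atan ((exp M - x1)/y) - atan ((exp M - x2)/y).
Proof. intros Hy. rewrite !Carg_w2 by auto. ring. Qed.

Lemma Pa x1 x2 y M : 0 < x1 -> x1 < x2 -> 0 < y -> exp M <= x1 + x2 -> 0 <= atan (rr x2 y M) - atan (rr x1 y M).
Proof.
  intros H1 H2 Hy Hu. pose proof (exp_pos M).
  assert (rr x1 y M <= rr x2 y M).
  { unfold rr, Rdiv. apply Rmult_le_compat_r. left; apply Rinv_0_lt_compat; nra. nra. }
  pose proof (atan_mono _ _ H0). lra.
Qed.

Lemma Pab x1 x2 y M : 0 < x1 -> x1 < x2 -> 0 < y -> y*y <= x1*x2/2 ->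
  - (2 * exp M * y / (x1 * x2)) <= atan (rr x2 y M) - atan (rr x1 y M).
Proof.
  intros H1 H2 Hy Hyy. pose proof (exp_pos M) as Hu.
  assert (0 <= 2 * exp M * y / (x1 * x2)) by (left; apply Rdiv_lt_0_compat; nra).
  destruct (Rle_lt_dec (exp M) (x1 + x2)) as [Hle|Hlt].
  - pose proof (Pa x1 x2 y M H1 H2 Hy Hle). lra.
  - pose proof (atan_bound (rr x2 y M)).
    assert (Hc : 0 < x1*x2/(2*(exp M*y))) by (apply Rdiv_lt_0_compat; nra).
    assert (Hr : rr x1 y M <= - (x1*x2/(2*(exp M*y)))).
    { unfold rr. apply Rmult_le_reg_r with (exp M * y). nra.
      unfold Rdiv. rewrite !Rmult_assoc, Rinv_l by nra.
      replace (- (x1 * (x2 * / (2 * (exp M * y)))) * (exp M * y)) with (- (x1*x2/2)) by (field; nra).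
      nra. }
    pose proof (atan_ub' _ _ Hc Hr) as Hat.
    replace (/ (x1 * x2 / (2 * (exp M * y)))) with (2 * exp M * y / (x1 * x2)) in Hat by (field; nra).
    lra.
Qed.

Lemma Pc x1 x2 y M g : 0 < x1 -> x1 < x2 -> 0 < y -> 0 < g -> exp M <= x1 - g ->
  atan (rr x2 y M) - atan (rr x1 y M) <= exp M * y / (x1 * g).
Proof.
  intros H1 H2 Hy Hg Hu. pose proof (exp_pos M).
  pose proof (atan_bound (rr x2 y M)).
  assert (Hc : 0 < x1*g/(exp M*y)) by (apply Rdiv_lt_0_compat; nra).
  assert (Hr : x1*g/(exp M*y) <= rr x1 y M).
  { unfold rr, Rdiv. apply Rmult_le_compat_r. left; apply Rinv_0_lt_compat; nra. nra. }
  pose proof (atan_lb' _ _ Hc Hr) as Hat.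
  replace (/ (x1 * g / (exp M * y))) with (exp M * y / (x1 * g)) in Hat by (field; nra).
  lra.
Qed.

Lemma Pd x1 x2 y M e1 e2 : 0 < x1 -> x1 < x2 -> 0 < y -> 0 < e1 -> 0 < e2 ->
  x1 + e1 <= exp M -> exp M <= x2 - e2 -> y*y <= x1*e1/2 ->
  PI - exp M * y / (x2 * e2) - 2 * exp M * y / (x1 * e1) <= atan (rr x2 y M) - atan (rr x1 y M).
Proof.
  intros H1 H2 Hy He1 He2 Hu1 Hu2 Hyy. pose proof (exp_pos M).
  assert (Hc2 : 0 < x2*e2/(exp M*y)) by (apply Rdiv_lt_0_compat; nra).
  assert (Hr2 : x2*e2/(exp M*y) <= rr x2 y M).
  { unfold rr, Rdiv. apply Rmult_le_compat_r. left; apply Rinv_0_lt_compat; nra. nra. }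
  pose proof (atan_lb' _ _ Hc2 Hr2) as Hat2.
  assert (Hc1 : 0 < x1*e1/(2*(exp M*y))) by (apply Rdiv_lt_0_compat; nra).
  assert (Hr1 : rr x1 y M <= - (x1*e1/(2*(exp M*y)))).
  { unfold rr. apply Rmult_le_reg_r with (exp M * y). nra.
    unfold Rdiv. rewrite !Rmult_assoc, Rinv_l by nra.
    replace (- (x1 * (e1 * / (2 * (exp M * y)))) * (exp M * y)) with (- (x1*e1/2)) by (field; nra).
    nra. }
  pose proof (atan_ub' _ _ Hc1 Hr1) as Hat1.
  replace (/ (x2 * e2 / (exp M * y))) with (exp M * y / (x2 * e2)) in Hat2 by (field; nra).
  replace (/ (x1 * e1 / (2 * (exp M * y)))) with (2 * exp M * y / (x1 * e1)) in Hat1 by (field; nra).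
  lra.
Qed.

Lemma Pe x1 x2 y M : x1 < x2 -> 0 < y -> 0 <= atan ((exp M - x1)/y) - atan ((exp M - x2)/y).
Proof.
  intros H Hy. assert ((exp M - x2)/y <= (exp M - x1)/y).
  { unfold Rdiv. apply Rmult_le_compat_r. left; apply Rinv_0_lt_compat; lra. lra. }
  pose proof (atan_mono _ _ H0). lra.
Qed.

Lemma Pf x1 x2 y M g : x1 < x2 -> 0 < y -> 0 < g -> x2 + g <= exp M ->
  atan ((exp M - x1)/y) - atan ((exp M - x2)/y) <= y / g.
Proof.
  intros H Hy Hg Hu. pose proof (atan_bound ((exp M - x1)/y)).
  assert (Hc : 0 < g / y) by (apply Rdiv_lt_0_compat; lra).
  assert (Hr : g/y <= (exp M - x2)/y).
  { unfold Rdiv. apply Rmult_le_compat_r. left; apply Rinv_0_lt_compat; lra. lra. }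
  pose proof (atan_lb' _ _ Hc Hr) as Hat.
  replace (/ (g / y)) with (y / g) in Hat by (field; lra). lra.
Qed.

Lemma Pg x1 x2 y M e1 e2 : 0 < y -> 0 < e1 -> 0 < e2 -> x1 + e1 <= exp M -> exp M <= x2 - e2 ->
  PI - y / e1 - y / e2 <= atan ((exp M - x1)/y) - atan ((exp M - x2)/y).
Proof.
  intros Hy He1 He2 Hu1 Hu2.
  assert (Hc1 : 0 < e1 / y) by (apply Rdiv_lt_0_compat; lra).
  assert (Hr1 : e1/y <= (exp M - x1)/y).
  { unfold Rdiv. apply Rmult_le_compat_r. left; apply Rinv_0_lt_compat; lra. lra. }
  pose proof (atan_lb' _ _ Hc1 Hr1) as Hat1.
  assert (Hc2 : 0 < e2 / y) by (apply Rdiv_lt_0_compat; lra).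
  assert (Hr2 : (exp M - x2)/y <= - (e2/y)).
  { unfold Rdiv. rewrite Ropp_mult_distr_l. apply Rmult_le_compat_r. left; apply Rinv_0_lt_compat; lra. lra. }
  pose proof (atan_ub' _ _ Hc2 Hr2) as Hat2.
  replace (/ (e1 / y)) with (y / e1) in Hat1 by (field; lra).
  replace (/ (e2 / y)) with (y / e2) in Hat2 by (field; lra). lra.
Qed.
Lemma exRInt_D (n : nat) (Vs beta : nat -> R) (Vf : R -> R)
  (HVs : forall k : nat, (k < n)%nat -> Vs k < Vs (S k))
  (HVf : forall k : nat, (1 <= k <= n)%nat ->
         forall M : R, Vs (pred k) <= M <= Vs k ->
         Vf M = Vf (Vs (pred k)) + beta k * (M - Vs (pred k)))
  (c0 c1 : R) (h : R -> R) a b :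
  (forall x, continuous h x) -> Vs 0%nat <= a -> a <= b -> b <= Vs n ->
  ex_RInt (fun M => (c0 + c1 * Derive Vf M) * h M) a b.
Proof.
  intros Hh Ha Hab Hb.
  apply ex_RInt_pw with (bl n Vs); auto.
  intros p q Hp Hpq Hq Hno.
  destruct (seg_interval n Vs HVs p q) as [k [Hk Hseg]]; try lra.
  intros x Hx; apply Hno; auto.
  exists (fun M => (c0 + c1 * beta k) * h M). split.
  - intros x. apply (continuous_mult (K:=R_AbsRing) (fun _ => c0 + c1 * beta k) h).
    apply continuous_const. apply Hh.
  - intros x Hx. rewrite (Derive_seg n Vs beta Vf HVf k Hk x (Hseg x Hx)). reflexivity.
Qed.

Lemma Derive_range (n : nat) (Vs beta : nat -> R) (Vf : R -> R)
  (HVs : forall k : nat, (k < n)%nat -> Vs k < Vs (S k))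
  (Hbeta_range : forall k : nat, (1 <= k <= n)%nat -> -1 <= beta k <= 1)
  (HVf : forall k : nat, (1 <= k <= n)%nat ->
         forall M : R, Vs (pred k) <= M <= Vs k ->
         Vf M = Vf (Vs (pred k)) + beta k * (M - Vs (pred k))) M :
  Vs 0%nat < M -> M < Vs n -> ~ In M (bl n Vs) -> -1 <= Derive Vf M <= 1.
Proof.
  intros H0 H1 H2. destruct (seg_exists n Vs HVs M H0 H1 H2) as [k [Hk HM]].
  rewrite (Derive_seg n Vs beta Vf HVf k Hk M HM). auto.
Qed.

Lemma Im_I1 (n : nat) (Vs beta : nat -> R) (Vf : R -> R)
  (HVs : forall k : nat, (k < n)%nat -> Vs k < Vs (S k))
  (HVf : forall k : nat, (1 <= k <= n)%nat ->
         forall M : R, Vs (pred k) <= M <= Vs k ->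
         Vf M = Vf (Vs (pred k)) + beta k * (M - Vs (pred k)))
  x y a b : 0 < y -> Vs 0%nat <= a -> a <= b -> b <= Vs n ->
  Im (@RInt C_R_CompleteNormedModule (fun M => (RtoC (/2 * (1 + Derive Vf M))%R * Cln (1 - RtoC (exp M) / (x,y)))%C : C) a b)
  = RInt (fun M => /2 * (1 + Derive Vf M) * Carg (1 - RtoC (exp M) / (x,y))%C) a b.
Proof.
  intros Hy Ha Hab Hb.
  destruct (C_RInt_Im (fun M => (RtoC (/2 * (1 + Derive Vf M))%R * Cln (1 - RtoC (exp M) / (x,y)))%C) a b) as [_ E].
  - apply (ex_RInt_ext (V:=R_NormedModule) (fun M => (/2 + /2 * Derive Vf M) * ln (Cmod (1 - RtoC (exp M) / (x,y))%C))).
    + intros t _. unfold Cln, Cmult, RtoC; simpl. ring.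
    + apply (exRInt_D n Vs beta Vf HVs HVf); auto. intros t; apply cont_ln_w1; auto.
  - apply (ex_RInt_ext (V:=R_NormedModule) (fun M => (/2 + /2 * Derive Vf M) * Carg (1 - RtoC (exp M) / (x,y))%C)).
    + intros t _. unfold Cln, Cmult, RtoC; simpl. ring.
    + apply (exRInt_D n Vs beta Vf HVs HVf); auto. intros t; apply cont_Carg_w1; auto.
  - rewrite E. apply RInt_ext. intros t _. unfold Cln, Cmult, RtoC; simpl. ring.
Qed.

Lemma Im_I2 (n : nat) (Vs beta : nat -> R) (Vf : R -> R)
  (HVs : forall k : nat, (k < n)%nat -> Vs k < Vs (S k))
  (HVf : forall k : nat, (1 <= k <= n)%nat ->
         forall M : R, Vs (pred k) <= M <= Vs k ->
         Vf M = Vf (Vs (pred k)) + beta k * (M - Vs (pred k)))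
  x y a b : 0 < y -> Vs 0%nat <= a -> a <= b -> b <= Vs n ->
  Im (@RInt C_R_CompleteNormedModule (fun M => (RtoC (/2 * (1 - Derive Vf M))%R * Cln (1 - RtoC (exp (- M)) * (x,y)))%C : C) a b)
  = RInt (fun M => /2 * (1 - Derive Vf M) * Carg (1 - RtoC (exp (- M)) * (x,y))%C) a b.
Proof.
  intros Hy Ha Hab Hb.
  destruct (C_RInt_Im (fun M => (RtoC (/2 * (1 - Derive Vf M))%R * Cln (1 - RtoC (exp (- M)) * (x,y)))%C) a b) as [_ E].
  - apply (ex_RInt_ext (V:=R_NormedModule) (fun M => (/2 + - /2 * Derive Vf M) * ln (Cmod (1 - RtoC (exp (- M)) * (x,y))%C))).
    + intros t _. unfold Cln, Cmult, RtoC; simpl. ring.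
    + apply (exRInt_D n Vs beta Vf HVs HVf); auto. intros t; apply cont_ln_w2; auto.
  - apply (ex_RInt_ext (V:=R_NormedModule) (fun M => (/2 + - /2 * Derive Vf M) * Carg (1 - RtoC (exp (- M)) * (x,y))%C)).
    + intros t _. unfold Cln, Cmult, RtoC; simpl. ring.
    + apply (exRInt_D n Vs beta Vf HVs HVf); auto. intros t; apply cont_Carg_w2; auto.
  - rewrite E. apply RInt_ext. intros t _. unfold Cln, Cmult, RtoC; simpl. ring.
Qed.

Lemma Im_Cminus (a b : C) : Im (a - b)%C = Im a - Im b.
Proof. destruct a, b; unfold Cminus, Cplus, Copp, Im; simpl. ring. Qed.

Lemma Im_S (n : nat) (Vs beta : nat -> R) (Vf : R -> R)
  (HVs : forall k : nat, (k < n)%nat -> Vs k < Vs (S k))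
  (HVf : forall k : nat, (1 <= k <= n)%nat ->
         forall M : R, Vs (pred k) <= M <= Vs k ->
         Vf M = Vf (Vs (pred k)) + beta k * (M - Vs (pred k)))
  tau chi x y : 0 < y -> Vs 0%nat <= tau -> tau <= Vs n ->
  Im (S_fun Vs n Vf tau chi (x,y)) =
    RInt (fun M => /2 * (1 + Derive Vf M) * Carg (1 - RtoC (exp M) / (x,y))%C) (Vs 0%nat) tau
  - RInt (fun M => /2 * (1 - Derive Vf M) * Carg (1 - RtoC (exp (- M)) * (x,y))%C) tau (Vs n)
  - (chi - /2 * Vf tau) * Carg (x,y).
Proof.
  intros Hy H0 H1. unfold S_fun. rewrite !Im_Cminus.
  rewrite (Im_I1 n Vs beta Vf HVs HVf) by (auto; lra).
  rewrite (Im_I2 n Vs beta Vf HVs HVf) by (auto; lra).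
  rewrite im_scal_l. reflexivity.
Qed.

Lemma RInt_Rminus (f g : R -> R) a b : ex_RInt f a b -> ex_RInt g a b ->
  RInt (fun x => f x - g x) a b = RInt f a b - RInt g a b.
Proof. intros Hf Hg. exact (RInt_minus (V:=R_CompleteNormedModule) f g a b Hf Hg). Qed.

Lemma Q_formula (n : nat) (Vs beta : nat -> R) (Vf : R -> R)
  (HVs : forall k : nat, (k < n)%nat -> Vs k < Vs (S k))
  (HVf : forall k : nat, (1 <= k <= n)%nat ->
         forall M : R, Vs (pred k) <= M <= Vs k ->
         Vf M = Vf (Vs (pred k)) + beta k * (M - Vs (pred k)))
  tau chi x1 x2 y : 0 < y -> Vs 0%nat <= tau -> tau <= Vs n ->
  Im (S_fun Vs n Vf tau chi (x1,y)) - Im (S_fun Vs n Vf tau chi (x2,y)) =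
    RInt (fun M => /2 * (1 + Derive Vf M) * (Carg (1 - RtoC (exp M) / (x1,y))%C - Carg (1 - RtoC (exp M) / (x2,y))%C)) (Vs 0%nat) tau
  - RInt (fun M => /2 * (1 - Derive Vf M) * (Carg (1 - RtoC (exp (- M)) * (x1,y))%C - Carg (1 - RtoC (exp (- M)) * (x2,y))%C)) tau (Vs n)
  - (chi - /2 * Vf tau) * (Carg (x1,y) - Carg (x2,y)).
Proof.
  intros Hy H0 H1.
  rewrite !(Im_S n Vs beta Vf HVs HVf) by auto.
  assert (E1 : forall x, ex_RInt (fun M => /2 * (1 + Derive Vf M) * Carg (1 - RtoC (exp M) / (x,y))%C) (Vs 0%nat) tau).
  { intros x. apply (ex_RInt_ext (V:=R_NormedModule) (fun M => (/2 + /2 * Derive Vf M) * Carg (1 - RtoC (exp M) / (x,y))%C)).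
    intros t _; now rewrite Rmult_plus_distr_l, Rmult_1_r. apply (exRInt_D n Vs beta Vf HVs HVf); auto; try lra. intros t; apply cont_Carg_w1; auto. }
  assert (E2 : forall x, ex_RInt (fun M => /2 * (1 - Derive Vf M) * Carg (1 - RtoC (exp (- M)) * (x,y))%C) tau (Vs n)).
  { intros x. apply (ex_RInt_ext (V:=R_NormedModule) (fun M => (/2 + - /2 * Derive Vf M) * Carg (1 - RtoC (exp (- M)) * (x,y))%C)).
    intros t _; match goal with |- ?a = ?b => change (@eq R a b) end; ring. apply (exRInt_D n Vs beta Vf HVs HVf); auto; try lra. intros t; apply cont_Carg_w2; auto. }
  rewrite (RInt_ext (fun M => /2 * (1 + Derive Vf M) * (Carg (1 - RtoC (exp M) / (x1,y))%C - Carg (1 - RtoC (exp M) / (x2,y))%C))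
     (fun M => /2 * (1 + Derive Vf M) * Carg (1 - RtoC (exp M) / (x1,y))%C - /2 * (1 + Derive Vf M) * Carg (1 - RtoC (exp M) / (x2,y))%C))
     by (intros; match goal with |- ?a = ?b => change (@eq R a b) end; ring).
  rewrite (RInt_ext (fun M => /2 * (1 - Derive Vf M) * (Carg (1 - RtoC (exp (- M)) * (x1,y))%C - Carg (1 - RtoC (exp (- M)) * (x2,y))%C))
     (fun M => /2 * (1 - Derive Vf M) * Carg (1 - RtoC (exp (- M)) * (x1,y))%C - /2 * (1 - Derive Vf M) * Carg (1 - RtoC (exp (- M)) * (x2,y))%C))
     by (intros; match goal with |- ?a = ?b => change (@eq R a b) end; ring).
  rewrite !RInt_Rminus by auto. ring.
Qed.
Lemma cont_Rminus (f g : R -> R) x : continuous f x -> continuous g x -> continuous (fun t => f t - g t) x.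
Proof. intros Hf Hg. exact (continuous_minus (V:=R_NormedModule) f g x Hf Hg). Qed.

Lemma RInt_split3 (f : R -> R) a b c d : ex_RInt f a b -> ex_RInt f b c -> ex_RInt f c d ->
  RInt f a d = RInt f a b + RInt f b c + RInt f c d.
Proof.
  intros H1 H2 H3.
  assert (H12 : ex_RInt f a c) by (apply (ex_RInt_Chasles (V:=R_NormedModule)) with b; auto).
  rewrite <- (RInt_Chasles (V:=R_CompleteNormedModule) f a c d H12 H3).
  rewrite <- (RInt_Chasles (V:=R_CompleteNormedModule) f a b c H1 H2).
  reflexivity.
Qed.

Lemma exRInt_A1 (n : nat) (Vs beta : nat -> R) (Vf : R -> R)
  (HVs : forall k : nat, (k < n)%nat -> Vs k < Vs (S k))
  (HVf : forall k : nat, (1 <= k <= n)%nat ->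
         forall M : R, Vs (pred k) <= M <= Vs k ->
         Vf M = Vf (Vs (pred k)) + beta k * (M - Vs (pred k)))
  x1 x2 y a b : 0 < y -> Vs 0%nat <= a -> a <= b -> b <= Vs n ->
  ex_RInt (fun M => /2 * (1 + Derive Vf M) * (Carg (1 - RtoC (exp M) / (x1,y))%C - Carg (1 - RtoC (exp M) / (x2,y))%C)) a b.
Proof.
  intros Hy Ha Hab Hb.
  apply (ex_RInt_ext (V:=R_NormedModule) (fun M => (/2 + /2 * Derive Vf M) * (Carg (1 - RtoC (exp M) / (x1,y))%C - Carg (1 - RtoC (exp M) / (x2,y))%C))).
  intros t _; match goal with |- ?a = ?b => change (@eq R a b) end; ring.
  apply (exRInt_D n Vs beta Vf HVs HVf); auto.
  intros t. apply cont_Rminus; apply cont_Carg_w1; auto.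
Qed.

Lemma exRInt_B2 (n : nat) (Vs beta : nat -> R) (Vf : R -> R)
  (HVs : forall k : nat, (k < n)%nat -> Vs k < Vs (S k))
  (HVf : forall k : nat, (1 <= k <= n)%nat ->
         forall M : R, Vs (pred k) <= M <= Vs k ->
         Vf M = Vf (Vs (pred k)) + beta k * (M - Vs (pred k)))
  x1 x2 y a b : 0 < y -> Vs 0%nat <= a -> a <= b -> b <= Vs n ->
  ex_RInt (fun M => /2 * (1 - Derive Vf M) * (Carg (1 - RtoC (exp (- M)) * (x1,y))%C - Carg (1 - RtoC (exp (- M)) * (x2,y))%C)) a b.
Proof.
  intros Hy Ha Hab Hb.
  apply (ex_RInt_ext (V:=R_NormedModule) (fun M => (/2 + - /2 * Derive Vf M) * (Carg (1 - RtoC (exp (- M)) * (x1,y))%C - Carg (1 - RtoC (exp (- M)) * (x2,y))%C))).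
  intros t _; match goal with |- ?a = ?b => change (@eq R a b) end; ring.
  apply (exRInt_D n Vs beta Vf HVs HVf); auto.
  intros t. apply cont_Rminus; apply cont_Carg_w2; auto.
Qed.

Lemma exp_le a b : a <= b -> exp a <= exp b.
Proof. intros [H| ->]; [left; apply exp_increasing; auto | lra]. Qed.

Lemma mul01_lb A D c : 0 <= A <= 1 -> - c <= D -> 0 <= c -> - c <= A * D.
Proof. intros. destruct (Rle_lt_dec 0 D); nra. Qed.

Lemma mul01_ub A D c : 0 <= A <= 1 -> D <= c -> 0 <= c -> A * D <= c.
Proof. intros. destruct (Rle_lt_dec 0 D); nra. Qed.

Lemma A_range (n : nat) (Vs beta : nat -> R) (Vf : R -> R)
  (HVs : forall k : nat, (k < n)%nat -> Vs k < Vs (S k))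
  (Hbeta_range : forall k : nat, (1 <= k <= n)%nat -> -1 <= beta k <= 1)
  (HVf : forall k : nat, (1 <= k <= n)%nat ->
         forall M : R, Vs (pred k) <= M <= Vs k ->
         Vf M = Vf (Vs (pred k)) + beta k * (M - Vs (pred k))) M :
  Vs 0%nat < M -> M < Vs n -> ~ In M (bl n Vs) ->
  0 <= /2 * (1 + Derive Vf M) <= 1 /\ 0 <= /2 * (1 - Derive Vf M) <= 1.
Proof.
  intros H0 H1 H2. pose proof (Derive_range n Vs beta Vf HVs Hbeta_range HVf M H0 H1 H2). lra.
Qed.

Lemma LB_A (n : nat) (Vs beta : nat -> R) (Vf : R -> R)
  (HVs : forall k : nat, (k < n)%nat -> Vs k < Vs (S k))
  (Hbeta_range : forall k : nat, (1 <= k <= n)%nat -> -1 <= beta k <= 1)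
  (HVf : forall k : nat, (1 <= k <= n)%nat ->
         forall M : R, Vs (pred k) <= M <= Vs k ->
         Vf M = Vf (Vs (pred k)) + beta k * (M - Vs (pred k)))
  i (Hi : (1 <= i <= n)%nat) a1 a2 a3 a4 tau y
  (Ha1 : Vs (pred i) <= a1) (H12 : a1 < a2) (H23 : a2 < a3) (H34 : a3 < a4) (Ha4 : a4 <= Vs i)
  (Htau : Vs i < tau) (Htau2 : tau <= Vs n) (Hy : 0 < y)
  (Hyy1 : y*y <= exp a1 * exp a4 / 2) (Hyy2 : y*y <= exp a1 * (exp a2 - exp a1) / 2) :
  /2*(1+beta i) * (PI - exp (Vs n) * y / (exp a4 * (exp a4 - exp a3)) - 2 * exp (Vs n) * y / (exp a1 * (exp a2 - exp a1))) * (a3 - a2)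
  - (2 * exp (Vs n) * y / (exp a1 * exp a4)) * (tau - Vs 0%nat) - (y / (exp tau - exp a4)) * (Vs n - tau)
  <= RInt (fun M => /2 * (1 + Derive Vf M) * (Carg (1 - RtoC (exp M) / (exp a1,y))%C - Carg (1 - RtoC (exp M) / (exp a4,y))%C)) (Vs 0%nat) tau
   - RInt (fun M => /2 * (1 - Derive Vf M) * (Carg (1 - RtoC (exp (- M)) * (exp a1,y))%C - Carg (1 - RtoC (exp (- M)) * (exp a4,y))%C)) tau (Vs n).
Proof.
  assert (HV0 : Vs 0%nat <= Vs (pred i)) by (apply (Vs_mono n Vs HVs); lia).
  assert (HVi : Vs i <= Vs n) by (apply (Vs_mono n Vs HVs); lia).
  set (x1 := exp a1). set (x2 := exp a4). set (EN := exp (Vs n)).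
  assert (Hx1 : 0 < x1) by apply exp_pos.
  assert (Hx12 : x1 < x2) by (apply exp_increasing; lra).
  assert (He1 : 0 < exp a2 - x1) by (pose proof (exp_increasing a1 a2 H12); unfold x1; lra).
  assert (He2 : 0 < x2 - exp a3) by (pose proof (exp_increasing a3 a4 H34); unfold x2; lra).
  assert (Hg : 0 < exp tau - x2) by (pose proof (exp_increasing a4 tau ltac:(lra)); unfold x2; lra).
  set (c := 2 * EN * y / (x1 * x2)).
  assert (Hc : 0 <= c) by (left; unfold c, EN; apply Rdiv_lt_0_compat; [pose proof (exp_pos (Vs n)); nra|nra]).
  set (f := fun M => /2 * (1 + Derive Vf M) * (Carg (1 - RtoC (exp M) / (x1,y))%C - Carg (1 - RtoC (exp M) / (x2,y))%C)).
  assert (Hex : forall a b, Vs 0%nat <= a -> a <= b -> b <= Vs n -> ex_RInt f a b).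
  { intros a b Ha Hab Hb. apply (exRInt_A1 n Vs beta Vf HVs HVf); auto. }
  assert (Hpt : forall M, Vs 0%nat < M -> M < Vs n -> ~ In M (bl n Vs) -> - c <= f M).
  { intros M H0 H1 H2. unfold f. destruct (A_range n Vs beta Vf HVs Hbeta_range HVf M H0 H1 H2) as [HA _].
    apply mul01_lb; auto. rewrite D1_eq by auto.
    pose proof (Pab x1 x2 y M Hx1 Hx12 Hy Hyy1).
    assert (exp M <= EN) by (apply exp_le; lra).
    assert (2 * exp M * y / (x1 * x2) <= c).
    { unfold c, Rdiv. apply Rmult_le_compat_r. left; apply Rinv_0_lt_compat; nra. nra. }
    lra. }
  rewrite (RInt_split3 f (Vs 0%nat) a2 a3 tau) by (apply Hex; lra).
  assert (P1 : - c * (a2 - Vs 0%nat) <= RInt f (Vs 0%nat) a2).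
  { apply RInt_ge_const_pw with (bl n Vs). lra. apply Hex; lra.
    intros M HM Hn. apply Hpt; auto; lra. }
  assert (P3 : - c * (tau - a3) <= RInt f a3 tau).
  { apply RInt_ge_const_pw with (bl n Vs). lra. apply Hex; lra.
    intros M HM Hn. apply Hpt; auto; lra. }
  set (K2 := /2*(1+beta i) * (PI - EN * y / (x2 * (x2 - exp a3)) - 2 * EN * y / (x1 * (exp a2 - x1)))).
  assert (P2 : K2 * (a3 - a2) <= RInt f a2 a3).
  { apply RInt_ge_const_pw with (@nil R). lra. apply Hex; lra.
    intros M HM _. unfold f, K2.
    rewrite (Derive_seg n Vs beta Vf HVf i Hi M) by lra.
    pose proof (Hbeta_range i Hi).
    apply Rmult_le_compat_l. lra.
    rewrite D1_eq by auto.
    assert (Hu1 : x1 + (exp a2 - x1) <= exp M) by (ring_simplify; apply exp_le; lra).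
    assert (Hu2 : exp M <= x2 - (x2 - exp a3)) by (ring_simplify; apply exp_le; lra).
    pose proof (Pd x1 x2 y M (exp a2 - x1) (x2 - exp a3) Hx1 Hx12 Hy He1 He2 Hu1 Hu2 Hyy2) as Hd.
    assert (exp M <= EN) by (apply exp_le; lra).
    assert (exp M * y / (x2 * (x2 - exp a3)) <= EN * y / (x2 * (x2 - exp a3))).
    { unfold Rdiv. apply Rmult_le_compat_r. left; apply Rinv_0_lt_compat; nra. nra. }
    assert (2 * exp M * y / (x1 * (exp a2 - x1)) <= 2 * EN * y / (x1 * (exp a2 - x1))).
    { unfold Rdiv. apply Rmult_le_compat_r. left; apply Rinv_0_lt_compat; nra. nra. }
    lra. }
  set (h := fun M => /2 * (1 - Derive Vf M) * (Carg (1 - RtoC (exp (- M)) * (x1,y))%C - Carg (1 - RtoC (exp (- M)) * (x2,y))%C)).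
  assert (PB : RInt h tau (Vs n) <= (y / (exp tau - x2)) * (Vs n - tau)).
  { apply RInt_le_const_pw with (bl n Vs). lra. apply (exRInt_B2 n Vs beta Vf HVs HVf); auto; lra.
    intros M HM Hn. unfold h.
    destruct (A_range n Vs beta Vf HVs Hbeta_range HVf M) as [_ HB]; auto; try lra.
    rewrite E2_eq by auto.
    apply mul01_ub; auto.
    apply Pf; auto. replace (x2 + (exp tau - x2)) with (exp tau) by ring. apply exp_le; lra.
    left; apply Rdiv_lt_0_compat; lra. }
  fold h. fold K2. fold c.
  assert (0 <= c * (a3 - a2)) by nra.
  replace (2 * EN * y / (x1 * x2)) with c by reflexivity.
  nra.
Qed.

Lemma UB_B (n : nat) (Vs beta : nat -> R) (Vf : R -> R)
  (HVs : forall k : nat, (k < n)%nat -> Vs k < Vs (S k))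
  (Hbeta_range : forall k : nat, (1 <= k <= n)%nat -> -1 <= beta k <= 1)
  (HVf : forall k : nat, (1 <= k <= n)%nat ->
         forall M : R, Vs (pred k) <= M <= Vs k ->
         Vf M = Vf (Vs (pred k)) + beta k * (M - Vs (pred k)))
  i (Hi : (1 <= i <= n)%nat) a1 a2 a3 a4 tau y
  (Ha1 : Vs (pred i) <= a1) (H12 : a1 < a2) (H23 : a2 < a3) (H34 : a3 < a4) (Ha4 : a4 <= Vs i)
  (Htau : tau < Vs (pred i)) (Htau2 : Vs 0%nat <= tau) (Hy : 0 < y) :
  RInt (fun M => /2 * (1 + Derive Vf M) * (Carg (1 - RtoC (exp M) / (exp a1,y))%C - Carg (1 - RtoC (exp M) / (exp a4,y))%C)) (Vs 0%nat) tau
   - RInt (fun M => /2 * (1 - Derive Vf M) * (Carg (1 - RtoC (exp (- M)) * (exp a1,y))%C - Carg (1 - RtoC (exp (- M)) * (exp a4,y))%C)) tau (Vs n)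
  <= (exp (Vs n) * y / (exp a1 * (exp a1 - exp tau))) * (tau - Vs 0%nat)
     - /2*(1-beta i) * (PI - y / (exp a2 - exp a1) - y / (exp a4 - exp a3)) * (a3 - a2).
Proof.
  assert (HVi : Vs i <= Vs n) by (apply (Vs_mono n Vs HVs); lia).
  set (x1 := exp a1). set (x2 := exp a4). set (EN := exp (Vs n)).
  assert (Hx1 : 0 < x1) by apply exp_pos.
  assert (Hx12 : x1 < x2) by (apply exp_increasing; lra).
  assert (He1 : 0 < exp a2 - x1) by (pose proof (exp_increasing a1 a2 H12); unfold x1; lra).
  assert (He2 : 0 < x2 - exp a3) by (pose proof (exp_increasing a3 a4 H34); unfold x2; lra).
  assert (Hg : 0 < x1 - exp tau) by (pose proof (exp_increasing tau a1 ltac:(lra)); unfold x1; lra).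
  set (c := EN * y / (x1 * (x1 - exp tau))).
  assert (Hc : 0 <= c) by (left; unfold c, EN; apply Rdiv_lt_0_compat; [pose proof (exp_pos (Vs n)); nra|nra]).
  set (f := fun M => /2 * (1 + Derive Vf M) * (Carg (1 - RtoC (exp M) / (x1,y))%C - Carg (1 - RtoC (exp M) / (x2,y))%C)).
  assert (PA : RInt f (Vs 0%nat) tau <= c * (tau - Vs 0%nat)).
  { apply RInt_le_const_pw with (bl n Vs). lra. apply (exRInt_A1 n Vs beta Vf HVs HVf); auto; lra.
    intros M HM Hn. unfold f.
    destruct (A_range n Vs beta Vf HVs Hbeta_range HVf M) as [HA _]; auto; try lra.
    rewrite D1_eq by auto.
    apply mul01_ub; auto.
    assert (Hu : exp M <= x1 - (x1 - exp tau)) by (ring_simplify; apply exp_le; lra).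
    pose proof (Pc x1 x2 y M (x1 - exp tau) Hx1 Hx12 Hy Hg Hu).
    assert (exp M <= EN) by (apply exp_le; lra).
    assert (exp M * y / (x1 * (x1 - exp tau)) <= c).
    { unfold c, Rdiv. apply Rmult_le_compat_r. left; apply Rinv_0_lt_compat; nra. nra. }
    lra. }
  set (h := fun M => /2 * (1 - Derive Vf M) * (Carg (1 - RtoC (exp (- M)) * (x1,y))%C - Carg (1 - RtoC (exp (- M)) * (x2,y))%C)).
  assert (Hex : forall a b, Vs 0%nat <= a -> a <= b -> b <= Vs n -> ex_RInt h a b).
  { intros a b Ha Hab Hb. apply (exRInt_B2 n Vs beta Vf HVs HVf); auto. }
  assert (Hpt : forall M, Vs 0%nat < M -> M < Vs n -> ~ In M (bl n Vs) -> 0 <= h M).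
  { intros M H0 H1 H2. unfold h. destruct (A_range n Vs beta Vf HVs Hbeta_range HVf M H0 H1 H2) as [_ HB].
    rewrite E2_eq by auto. pose proof (Pe x1 x2 y M Hx12 Hy). nra. }
  assert (HV0 : Vs 0%nat <= Vs (pred i)) by (apply (Vs_mono n Vs HVs); lia).
  rewrite (RInt_split3 h tau a2 a3 (Vs n)) by (apply Hex; lra).
  assert (P1 : 0 * (a2 - tau) <= RInt h tau a2).
  { apply RInt_ge_const_pw with (bl n Vs). lra. apply Hex; lra.
    intros M HM Hn. apply Hpt; auto; lra. }
  assert (P3 : 0 * (Vs n - a3) <= RInt h a3 (Vs n)).
  { apply RInt_ge_const_pw with (bl n Vs). lra. apply Hex; lra.
    intros M HM Hn. apply Hpt; auto; lra. }
  set (K2 := /2*(1-beta i) * (PI - y / (exp a2 - x1) - y / (x2 - exp a3))).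
  assert (P2 : K2 * (a3 - a2) <= RInt h a2 a3).
  { apply RInt_ge_const_pw with (@nil R). lra. apply Hex; lra.
    intros M HM _. unfold h, K2.
    rewrite (Derive_seg n Vs beta Vf HVf i Hi M) by lra.
    pose proof (Hbeta_range i Hi).
    apply Rmult_le_compat_l. lra.
    rewrite E2_eq by auto.
    apply Pg; auto.
    ring_simplify; apply exp_le; lra.
    ring_simplify; apply exp_le; lra. }
  fold f. fold K2. fold c. lra.
Qed.
Lemma LC (f Sp : C -> C) (HD : forall z : C, Im z <> 0 -> is_derive f z (Sp z)) y t1 t2 B :
  y <> 0 -> t1 < t2 -> (forall t, t1 <= t <= t2 -> Rabs (Im (Sp (t,y))) <= B) ->
  Rabs (Im (f (t2,y)) - Im (f (t1,y))) <= B * (t2 - t1).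
Proof.
  intros Hy H12 HB.
  assert (Hder : forall t, is_derive (fun t => Im (f (t,y))) t (Im (Sp (t,y)))).
  { intros t. apply deriv_horiz. apply HD. simpl. exact Hy. }
  destruct (MVT_gen (fun t => Im (f (t,y))) t1 t2 (fun t => Im (Sp (t,y)))) as [c [Hc E]].
  - intros x _. apply Hder.
  - intros x _. apply continuity_pt_filterlim.
    apply (ex_derive_continuous (K:=R_AbsRing) (V:=R_NormedModule)). eexists. apply Hder.
  - rewrite Rmin_left, Rmax_right in Hc by lra.
    rewrite E, Rabs_mult, (Rabs_pos_eq (t2 - t1)) by lra.
    apply Rmult_le_compat_r. lra. apply HB; lra.
Qed.

Lemma Cmod_le_sum c : Cmod c <= Rabs (Re c) + Rabs (Im c).
Proof.
  destruct c as [a b]. unfold Cmod, Re, Im; simpl.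
  rewrite <- (sqrt_Rsqr (Rabs a + Rabs b)) by (pose proof (Rabs_pos a); pose proof (Rabs_pos b); lra).
  apply sqrt_le_1_alt. unfold Rsqr.
  pose proof (Rabs_pos a); pose proof (Rabs_pos b).
  assert (Ea : a*a = Rabs a * Rabs a) by (rewrite <- Rabs_mult; symmetry; apply Rabs_pos_eq; nra).
  assert (Eb : b*b = Rabs b * Rabs b) by (rewrite <- Rabs_mult; symmetry; apply Rabs_pos_eq; nra).
  replace (a*(a*1)) with (a*a) by ring. replace (b*(b*1)) with (b*b) by ring.
  rewrite Ea, Eb. nra.
Qed.

Lemma Sp_bound (Sp : C -> C) z0 d eps (Hz0 : 0 < z0)
  (Hd : forall w : C, prod_ball (RtoC z0) d w -> Im w <> 0 -> prod_ball (RtoC 0) eps (w * Sp w)%C)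
  (w : C) : Rabs (Re w - z0) < d -> Rabs (Im w) < d -> Im w <> 0 -> z0 / 2 <= Re w ->
  Rabs (Im (Sp w)) <= 4 * eps / z0.
Proof.
  intros H1 H2 H3 H4.
  assert (Hb : prod_ball (RtoC z0) d w).
  { destruct w as [a b]. unfold prod_ball; simpl in *. split; unfold ball; simpl; unfold AbsRing_ball, abs, minus, plus, opp; simpl.
    exact H1. replace (b + - 0) with b by ring. exact H2. }
  specialize (Hd w Hb H3).
  destruct (w * Sp w)%C as [p q] eqn:Ep.
  unfold prod_ball in Hd; simpl in Hd. destruct Hd as [Hp Hq].
  unfold ball in Hp, Hq; simpl in Hp, Hq; unfold AbsRing_ball, abs, minus, plus, opp in Hp, Hq; simpl in Hp, Hq.
  replace (p + - 0) with p in Hp by ring. replace (q + - 0) with q in Hq by ring.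
  assert (Hm : Cmod (w * Sp w)%C < 2 * eps).
  { rewrite Ep. pose proof (Cmod_le_sum (p,q)). simpl in H. lra. }
  rewrite Cmod_mult in Hm.
  assert (Hw : z0 / 2 <= Cmod w).
  { eapply Rle_trans; [apply H4|]. eapply Rle_trans; [apply Rle_abs|]. apply re_le_Cmod. }
  eapply Rle_trans; [apply Im_le_Cmod|].
  pose proof (Cmod_ge_0 (Sp w)).
  apply Rmult_le_reg_l with (z0 / 2). lra.
  replace (z0 / 2 * (4 * eps / z0)) with (2 * eps) by (field; lra).
  nra.
Qed.

Lemma expdiff a b : a <= b -> exp b - exp a <= exp b * (b - a).
Proof.
  intros H. replace a with (b + (a - b)) at 1 by ring. rewrite exp_plus.
  pose proof (exp_ineq1_le (a - b)). pose proof (exp_pos b). nra.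
Qed.
Theorem lemma2p1
  (n : nat) (Vs : nat -> R) (beta : nat -> R) (Vf : R -> R)
  (HVs : forall k : nat, (k < n)%nat -> Vs k < Vs (S k))
  (Hbeta_range : forall k : nat, (1 <= k <= n)%nat -> -1 <= beta k <= 1)
  (Hbeta0 : beta 0%nat = -1)
  (Hbeta_last : beta (S n) = 1)
  (Hbeta_jump : forall k : nat, (k <= n)%nat -> beta k <> beta (S k))
  (HVf : forall k : nat, (1 <= k <= n)%nat ->
         forall M : R, Vs (pred k) <= M <= Vs k ->
         Vf M = Vf (Vs (pred k)) + beta k * (M - Vs (pred k)))
  (j : nat) (Hj : (1 <= j <= n)%nat)
  (tau : R) (Htau : Vs (pred j) < tau < Vs j)
  (chi : R)
  (i : nat) (Hi : (1 <= i <= n)%nat) (Hij : i <> j)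
  (Hbi : beta i <> 1 /\ beta i <> -1) :
  ~ exists z0 : R,
      exp (Vs (pred i)) <= z0 <= exp (Vs i) /\
      exists Sp : C -> C,
        (forall z : C, Im z <> 0 -> is_derive (S_fun Vs n Vf tau chi) z (Sp z)) /\
        filterlim (fun z : C => (z * Sp z)%C)
                  (within (fun z : C => Im z <> 0) (locally (RtoC z0)))
                  (locally (RtoC 0)).
Proof.
  intros [z0 [[Hz0a Hz0b] [Sp [HD HL]]]].
  assert (HVi1 : Vs (pred i) < Vs i) by (apply (Vs_smono n Vs HVs); lia).
  assert (HV0 : Vs 0%nat <= Vs (pred i)) by (apply (Vs_mono n Vs HVs); lia).
  assert (HVn : Vs i <= Vs n) by (apply (Vs_mono n Vs HVs); lia).
  assert (HVj0 : Vs 0%nat <= Vs (pred j)) by (apply (Vs_mono n Vs HVs); lia).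
  assert (HVjn : Vs j <= Vs n) by (apply (Vs_mono n Vs HVs); lia).
  set (EN := exp (Vs n)). assert (HEN : 0 < EN) by apply exp_pos.
  assert (Hz0 : 0 < z0) by (pose proof (exp_pos (Vs (pred i))); lra).
  set (s0 := ln z0). assert (Hs0 : exp s0 = z0) by (apply exp_ln; auto).
  assert (Hs0a : Vs (pred i) <= s0).
  { destruct (Rle_lt_dec (Vs (pred i)) s0) as [h|h]; auto. pose proof (exp_increasing _ _ h). lra. }
  assert (Hs0b : s0 <= Vs i).
  { destruct (Rle_lt_dec s0 (Vs i)) as [h|h]; auto. pose proof (exp_increasing _ _ h). lra. }
  set (kA := /2*(1+beta i)). set (kB := /2*(1-beta i)).
  destruct Hbi as [Hb1 Hb2]. pose proof (Hbeta_range i Hi) as Hbr.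
  assert (Hb3 : -1 < beta i) by (destruct (proj1 Hbr) as [h|h]; [exact h| exfalso; apply Hb2; auto]).
  assert (Hb4 : beta i < 1) by (destruct (proj2 Hbr) as [h|h]; [exact h| exfalso; apply Hb1; auto]).
  assert (HkA : 0 < kA) by (unfold kA; lra). assert (HkB : 0 < kB) by (unfold kB; lra).
  set (kap := Rmin kA kB).
  assert (Hkap : 0 < kap) by (apply Rmin_glb_lt; auto).
  assert (HkapA : kap <= kA) by apply Rmin_l. assert (HkapB : kap <= kB) by apply Rmin_r.
  pose proof PI_RGT_0 as HPI.
  set (eps := kap * PI * z0 / (48 * EN)).
  assert (Heps : 0 < eps) by (unfold eps; apply Rdiv_lt_0_compat; [apply Rmult_lt_0_compat; [nra|auto]|lra]).
  specialize (HL (ball (RtoC 0) (mkposreal eps Heps)) (locally_ball _ _)).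
  destruct HL as [d Hd].
  assert (Hd' : forall w : C, prod_ball (RtoC z0) d w -> Im w <> 0 -> prod_ball (RtoC 0) eps (w * Sp w)%C)
    by exact Hd.
  set (del := Rmin d (z0/2)).
  assert (Hdel : 0 < del) by (apply Rmin_glb_lt; [apply cond_pos|lra]).
  assert (Hdeld : del <= d) by apply Rmin_l. assert (Hdelz : del <= z0/2) by apply Rmin_r.
  assert (HLip : forall y t1 t2, 0 < y < del -> z0 - del < t1 -> t1 < t2 -> t2 < z0 + del ->
      Rabs (Im (S_fun Vs n Vf tau chi (t2,y)) - Im (S_fun Vs n Vf tau chi (t1,y))) <= 4*eps/z0 * (t2 - t1)).
  { intros y t1 t2 Hy H1 H2 H3. apply LC with Sp; auto. lra.
    intros t Ht. apply (Sp_bound Sp z0 d eps Hz0 Hd' (t,y)); simpl.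
    - apply Rabs_def1; lra.
    - rewrite Rabs_pos_eq; lra.
    - lra.
    - lra. }
  set (rho := del / (2*EN)).
  assert (Hrho : 0 < rho) by (unfold rho; apply Rdiv_lt_0_compat; lra).
  assert (HrhoE : EN * rho = del / 2) by (unfold rho; field; lra).
  set (lo := Rmax (Vs (pred i)) (s0 - rho)). set (hi := Rmin (Vs i) (s0 + rho)).
  assert (Hlo1 : Vs (pred i) <= lo) by apply Rmax_l. assert (Hlo2 : s0 - rho <= lo) by apply Rmax_r.
  assert (Hhi1 : hi <= Vs i) by apply Rmin_l. assert (Hhi2 : hi <= s0 + rho) by apply Rmin_r.
  assert (Hlohi : lo < hi).
  { unfold lo, hi. apply Rmax_lub_lt; apply Rmin_glb_lt; lra. }
  assert (Hnear : forall a, lo <= a <= hi -> z0 - del/2 <= exp a <= z0 + del/2).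
  { intros a Ha. assert (HaEN : exp a <= EN) by (apply exp_le; lra).
    destruct (Rle_lt_dec s0 a) as [h|h].
    - pose proof (expdiff s0 a h). pose proof (exp_le _ _ h).
      assert (exp a * (a - s0) <= EN * rho) by (apply Rmult_le_compat; lra). lra.
    - pose proof (expdiff a s0 (Rlt_le _ _ h)). pose proof (exp_le _ _ (Rlt_le _ _ h)).
      assert (exp s0 * (s0 - a) <= EN * rho).
      { apply Rmult_le_compat; try lra. all: try (pose proof (exp_pos s0); lra). all: apply exp_le; lra. }
      lra. }
  set (dd := (hi - lo) / 5).
  assert (Hdd : 0 < dd) by (unfold dd; lra).
  set (a1 := lo + dd). set (a2 := lo + 2*dd). set (a3 := lo + 3*dd). set (a4 := lo + 4*dd).
  assert (Ha4hi : a4 < hi) by (unfold a4, dd; lra).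
  set (x1 := exp a1). set (x2 := exp a4).
  assert (Hx1n : z0 - del/2 <= x1 <= z0 + del/2) by (unfold x1; apply Hnear; unfold a1, dd; lra).
  assert (Hx2n : z0 - del/2 <= x2 <= z0 + del/2) by (unfold x2; apply Hnear; unfold a4, dd; lra).
  assert (Hx1 : 0 < x1) by apply exp_pos.
  assert (Hx12 : x1 < x2) by (apply exp_increasing; unfold a1, a4; lra).
  assert (Hx21 : x2 - x1 <= EN * (3 * dd)).
  { pose proof (expdiff a1 a4 ltac:(unfold a1, a4; lra)).
    assert (HH : exp a4 <= EN) by (apply exp_le; unfold a4, dd; lra).
    replace (a4 - a1) with (3*dd) in H by (unfold a4, a1; ring).
    assert (exp a4 * (3*dd) <= EN*(3*dd)) by (apply Rmult_le_compat_r; lra).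
    unfold x1, x2. lra. }
  assert (HQup : forall y, 0 < y < del ->
     Rabs (Im (S_fun Vs n Vf tau chi (x2,y)) - Im (S_fun Vs n Vf tau chi (x1,y))) <= kap * PI * dd / 4).
  { intros y Hy. eapply Rle_trans. apply HLip; auto; lra.
    assert (0 <= 4 * eps / z0) by (left; apply Rdiv_lt_0_compat; lra).
    eapply Rle_trans. apply Rmult_le_compat_l; [auto|apply Hx21].
    right. unfold eps. field. lra. }
  set (K := chi - /2 * Vf tau).
  assert (HKt : forall y, 0 < y -> Rabs (K * (Carg (x1,y) - Carg (x2,y))) <= Rabs K * (y / x1)).
  { intros y Hy. rewrite Rabs_mult. apply Rmult_le_compat_l. apply Rabs_pos.
    pose proof (Carg_z x1 y Hx1 Hy). pose proof (Carg_z x2 y ltac:(lra) Hy).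
    assert (y / x2 <= y / x1).
    { unfold Rdiv. apply Rmult_le_compat_l. lra. apply Rinv_le_contravar; lra. }
    apply Rabs_le. lra. }
  assert (He1 : 0 < exp a2 - x1) by (unfold x1; pose proof (exp_increasing a1 a2 ltac:(unfold a1, a2; lra)); lra).
  assert (He2 : 0 < x2 - exp a3) by (unfold x2; pose proof (exp_increasing a3 a4 ltac:(unfold a3, a4; lra)); lra).
  assert (Ha32 : a3 - a2 = dd) by (unfold a3, a2; ring).
  destruct (Nat.lt_gt_cases i j) as [[Hlt|Hgt] _]; [exact (Hij) | | ].
  -
    assert (HVij : Vs i <= Vs (pred j)) by (apply (Vs_mono n Vs HVs); lia).
    set (G := exp tau - x2).
    assert (HG : 0 < G) by (unfold G, x2; pose proof (exp_increasing a4 tau ltac:(unfold a4, dd; lra)); lra).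
    set (C1 := EN / (x2 * (x2 - exp a3)) + 2 * EN / (x1 * (exp a2 - x1))).
    assert (HC1 : 0 < C1).
    { unfold C1. apply Rplus_lt_0_compat; apply Rdiv_lt_0_compat; nra. }
    set (C2 := 2 * EN / (x1 * x2) * (tau - Vs 0%nat) + (Vs n - tau) / G + Rabs K / x1).
    assert (HC2 : 0 < C2).
    { unfold C2. assert (0 < 2 * EN / (x1 * x2) * (tau - Vs 0%nat)).
      { apply Rmult_lt_0_compat. apply Rdiv_lt_0_compat; nra. lra. }
      assert (0 <= (Vs n - tau) / G) by (unfold Rdiv; apply Rmult_le_pos; [lra|left; apply Rinv_0_lt_compat; lra]).
      assert (0 <= Rabs K / x1) by (unfold Rdiv; apply Rmult_le_pos; [apply Rabs_pos|left; apply Rinv_0_lt_compat; lra]).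
      lra. }
    set (y := Rmin (Rmin (Rmin 1 (del/2)) (Rmin (x1*x2/2) (x1*(exp a2 - x1)/2))) (Rmin (PI/4/C1) (kap*PI*dd/(4*C2)))).
    assert (Hy : 0 < y).
    { unfold y. apply Rmin_glb_lt; apply Rmin_glb_lt; try apply Rmin_glb_lt; try lra; try nra.
      apply Rdiv_lt_0_compat; lra.
      apply Rdiv_lt_0_compat; [|lra]. apply Rmult_lt_0_compat; [nra|lra]. }
    assert (Hy1 : y <= 1) by (unfold y; eapply Rle_trans; [apply Rmin_l|]; eapply Rle_trans; [apply Rmin_l|]; apply Rmin_l).
    assert (Hy2 : y <= del/2) by (unfold y; eapply Rle_trans; [apply Rmin_l|]; eapply Rle_trans; [apply Rmin_l|]; apply Rmin_r).
    assert (Hy3 : y <= x1*x2/2) by (unfold y; eapply Rle_trans; [apply Rmin_l|]; eapply Rle_trans; [apply Rmin_r|]; apply Rmin_l).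
    assert (Hy4 : y <= x1*(exp a2 - x1)/2) by (unfold y; eapply Rle_trans; [apply Rmin_l|]; eapply Rle_trans; [apply Rmin_r|]; apply Rmin_r).
    assert (Hy5 : y <= PI/4/C1) by (unfold y; eapply Rle_trans; [apply Rmin_r|]; apply Rmin_l).
    assert (Hy6 : y <= kap*PI*dd/(4*C2)) by (unfold y; eapply Rle_trans; [apply Rmin_r|]; apply Rmin_r).
    pose proof (HQup y ltac:(lra)) as Hup.
    rewrite Rabs_minus_sym in Hup.
    rewrite (Q_formula n Vs beta Vf HVs HVf tau chi x1 x2 y Hy) in Hup by lra.
    fold K in Hup. apply Rabs_le_between in Hup.
    assert (Hyy1 : y*y <= exp a1 * exp a4 / 2) by (fold x1 x2; nra).
    assert (Hyy2 : y*y <= exp a1 * (exp a2 - exp a1) / 2) by (fold x1; nra).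
    pose proof (LB_A n Vs beta Vf HVs Hbeta_range HVf i Hi a1 a2 a3 a4 tau y
      ltac:(unfold a1, dd; lra) ltac:(unfold a1, a2; lra) ltac:(unfold a2, a3; lra) ltac:(unfold a3, a4; lra)
      ltac:(unfold a4, dd; lra) ltac:(lra) ltac:(lra) Hy Hyy1 Hyy2) as HLB.
    change (exp a1) with x1 in HLB. change (exp a4) with x2 in HLB. change (exp (Vs n)) with EN in HLB.
    fold kA in HLB. fold G in HLB.
    assert (ET1 : EN * y / (x2 * (x2 - exp a3)) + 2 * EN * y / (x1 * (exp a2 - x1)) = y * C1).
    { unfold C1. field. repeat split; apply Rgt_not_eq; nra. }
    assert (ET2 : 2 * EN * y / (x1 * x2) * (tau - Vs 0%nat) + y / G * (Vs n - tau) + Rabs K * (y / x1) = y * C2).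
    { unfold C2. field. repeat split; apply Rgt_not_eq; nra. }
    assert (HT1 : y * C1 <= PI / 4).
    { apply Rmult_le_reg_r with (/ C1). apply Rinv_0_lt_compat; lra.
      rewrite Rmult_assoc, Rinv_r by lra. unfold Rdiv in Hy5. lra. }
    assert (HT2 : y * C2 <= kap * PI * dd / 4).
    { apply Rmult_le_reg_r with (/ C2). apply Rinv_0_lt_compat; lra.
      rewrite Rmult_assoc, Rinv_r by lra.
      replace (kap * PI * dd / 4 * / C2) with (kap * PI * dd / (4 * C2)) by (field; lra). lra. }
    pose proof (HKt y Hy) as HK. apply Rabs_le_between in HK.
    assert (Hm : kap * (3 * PI / 4) * dd <= kA * (PI - EN * y / (x2 * (x2 - exp a3)) - 2 * EN * y / (x1 * (exp a2 - x1))) * (a3 - a2)).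
    { rewrite Ha32. apply Rmult_le_compat_r. lra. apply Rmult_le_compat; lra. }
    nra.
  -
    assert (HVji : Vs j <= Vs (pred i)) by (apply (Vs_mono n Vs HVs); lia).
    set (G := x1 - exp tau).
    assert (HG : 0 < G) by (unfold G, x1; pose proof (exp_increasing tau a1 ltac:(unfold a1, dd; lra)); lra).
    set (C1 := 1 / (exp a2 - x1) + 1 / (x2 - exp a3)).
    assert (HC1 : 0 < C1).
    { unfold C1. apply Rplus_lt_0_compat; apply Rdiv_lt_0_compat; lra. }
    set (C2 := EN / (x1 * G) * (tau - Vs 0%nat) + Rabs K / x1).
    assert (HC2 : 0 < C2).
    { unfold C2. assert (0 < EN / (x1 * G) * (tau - Vs 0%nat)).
      { apply Rmult_lt_0_compat. apply Rdiv_lt_0_compat; nra. lra. }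
      assert (0 <= Rabs K / x1) by (unfold Rdiv; apply Rmult_le_pos; [apply Rabs_pos|left; apply Rinv_0_lt_compat; lra]).
      lra. }
    set (y := Rmin (Rmin 1 (del/2)) (Rmin (PI/4/C1) (kap*PI*dd/(4*C2)))).
    assert (Hy : 0 < y).
    { unfold y. apply Rmin_glb_lt; apply Rmin_glb_lt; try lra.
      apply Rdiv_lt_0_compat; lra.
      apply Rdiv_lt_0_compat; [|lra]. apply Rmult_lt_0_compat; [nra|lra]. }
    assert (Hy2 : y <= del/2) by (unfold y; eapply Rle_trans; [apply Rmin_l|]; apply Rmin_r).
    assert (Hy5 : y <= PI/4/C1) by (unfold y; eapply Rle_trans; [apply Rmin_r|]; apply Rmin_l).
    assert (Hy6 : y <= kap*PI*dd/(4*C2)) by (unfold y; eapply Rle_trans; [apply Rmin_r|]; apply Rmin_r).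
    pose proof (HQup y ltac:(lra)) as Hup.
    rewrite Rabs_minus_sym in Hup.
    rewrite (Q_formula n Vs beta Vf HVs HVf tau chi x1 x2 y Hy) in Hup by lra.
    fold K in Hup. apply Rabs_le_between in Hup.
    pose proof (UB_B n Vs beta Vf HVs Hbeta_range HVf i Hi a1 a2 a3 a4 tau y
      ltac:(unfold a1, dd; lra) ltac:(unfold a1, a2; lra) ltac:(unfold a2, a3; lra) ltac:(unfold a3, a4; lra)
      ltac:(unfold a4, dd; lra) ltac:(lra) ltac:(lra) Hy) as HUB.
    change (exp a1) with x1 in HUB. change (exp a4) with x2 in HUB. change (exp (Vs n)) with EN in HUB.
    fold kB in HUB. fold G in HUB.
    assert (ET1 : y / (exp a2 - x1) + y / (x2 - exp a3) = y * C1).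
    { unfold C1. field. repeat split; apply Rgt_not_eq; nra. }
    assert (ET2 : EN * y / (x1 * G) * (tau - Vs 0%nat) + Rabs K * (y / x1) = y * C2).
    { unfold C2. field. repeat split; apply Rgt_not_eq; nra. }
    assert (HT1 : y * C1 <= PI / 4).
    { apply Rmult_le_reg_r with (/ C1). apply Rinv_0_lt_compat; lra.
      rewrite Rmult_assoc, Rinv_r by lra. unfold Rdiv in Hy5. lra. }
    assert (HT2 : y * C2 <= kap * PI * dd / 4).
    { apply Rmult_le_reg_r with (/ C2). apply Rinv_0_lt_compat; lra.
      rewrite Rmult_assoc, Rinv_r by lra.
      replace (kap * PI * dd / 4 * / C2) with (kap * PI * dd / (4 * C2)) by (field; lra). lra. }
    pose proof (HKt y Hy) as HK. apply Rabs_le_between in HK.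
    assert (Hm : kap * (3 * PI / 4) * dd <= kB * (PI - y / (exp a2 - x1) - y / (x2 - exp a3)) * (a3 - a2)).
    { rewrite Ha32. apply Rmult_le_compat_r. lra. apply Rmult_le_compat; lra. }
    nra.
Qed.
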